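(* Let $K=1$ and fix a reflection matrix $\mathbf\Phi$ such that (SDR1.2) has an optimal solution. Then problem (P1.1) has an optimal solution $(\mathbf w_1,\mathbf R_0)$ whose dedicated sensing covariance lies in the null space of the user channel, i.e. $\mathbf h_1^H\mathbf R_0\mathbf h_1=0$.
   Context: Let $M,N\ge1$ be integers and $K=1$. Fixed data: $\mathbf G\in\mathbb C^{N\times M}$, $\mathbf h_{\mathrm d,1}\in\mathbb C^{M}$, $\mathbf h_{\mathrm r,1}\in\mathbb C^{N}$, threshold $\Gamma_1>0$, noise power $\sigma_1^2>0$, power budget $P_0>0$. A reflection matrix is $\mathbf\Phi=\mathrm{diag}(\mathbf v)$ with $\mathbf v\in\mathbb C^N$, $|v_n|=1$ for all $n$; put $\mathbf h_1=\mathbf h_{\mathrm d,1}+\mathbf G^H\mathbf\Phi^H\mathbf h_{\mathrm r,1}$ and $\mathbf H_1=\mathbf h_1\mathbf h_1^H$. The Type-I SINR is $\gamma_1^{\mathrm I}=|\mathbf h_1^H\mathbf w_1|^2/(\mathbf h_1^H\mathbf R_0\mathbf h_1+\sigma_1^2)$ for $\mathbf w_1\in\mathbb C^M$ and Hermitian $\mathbf R_0\succeq\mathbf 0$. For Hermitian $\mathbf X\succeq\mathbf 0$ define $f(\mathbf X)=\mathrm{tr}\big((\mathbf G\mathbf X\mathbf G^H)^{-1}\big)$ if $\mathbf G\mathbf X\mathbf G^H$ is invertible and $+\infty$ otherwise. Problem (P1.1): minimize $f(\mathbf w_1\mathbf w_1^H+\mathbf R_0)$ over $\mathbf w_1,\mathbf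 R_0\succeq\mathbf 0$ subject to $\gamma_1^{\mathrm I}\ge\Gamma_1$ and $\|\mathbf w_1\|^2+\mathrm{tr}(\mathbf R_0)\le P_0$. Problem (SDR1.2): minimize $f(\mathbf W_1+\mathbf R_0)$ over Hermitian $\mathbf W_1\succeq\mathbf 0,\mathbf R_0\succeq\mathbf 0$ subject to $(1+\tfrac1{\Gamma_1})\mathrm{tr}(\mathbf H_1\mathbf W_1)-\mathrm{tr}(\mathbf H_1(\mathbf W_1+\mathbf R_0))\ge\sigma_1^2$ and $\mathrm{tr}(\mathbf W_1)+\mathrm{tr}(\mathbf R_0)\le P_0$. *)

(* Defs.v *)
(* complex scalars modeled by an arbitrary
   numClosedFieldType C (e.g. complex numbers over a realType). *)
From HB Require Import structures.
From mathcomp Require Import all_boot all_order all_algebra.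
Set Implicit Arguments. Unset Strict Implicit. Unset Printing Implicit Defensive.
Import Order.TTheory GRing.Theory Num.Theory.
Local Open Scope ring_scope.

Section Defs.
Variable C : numClosedFieldType.

Definition ctr m n (A : 'M[C]_(m, n)) : 'M[C]_(n, m) := (map_mx Num.conj A)^T.

Definition psd n (A : 'M[C]_n) : Prop :=
  ctr A = A /\ forall x : 'cV[C]_n, 0 <= (ctr x *m A *m x) 0 0.

Definition qf n (h : 'cV[C]_n) (A : 'M[C]_n) : C := (ctr h *m A *m h) 0 0.

Definition Phi N (v : 'cV[C]_N) : 'M[C]_N := diag_mx v^T.

(* effective channel h_1 = h_d + G^H Phi^H h_r *)
Definition heff M N (G : 'M[C]_(N, M)) (hd : 'cV[C]_M) (hr : 'cV[C]_N)
  (v : 'cV[C]_N) : 'cV[C]_M := hd + ctr G *m ctr (Phi v) *m hr.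

(* f(X) = tr((G X G^H)^{-1}) if invertible, +oo (None) otherwise *)
Definition fobj M N (G : 'M[C]_(N, M)) (X : 'M[C]_M) : option C :=
  let Y := G *m X *m ctr G in
  if Y \in unitmx then Some (\tr (invmx Y)) else None.

Definition ext_le (a b : option C) : Prop :=
  match a, b with
  | _, None => True
  | None, Some _ => False
  | Some x, Some y => x <= y
  end.

Definition P11_feasible M (h : 'cV[C]_M) (Gamma sigma2 P0 : C)
  (w : 'cV[C]_M) (R0 : 'M[C]_M) : Prop :=
  psd R0 /\
  `|(ctr h *m w) 0 0| ^+ 2 / (qf h R0 + sigma2) >= Gamma /\
  (ctr w *m w) 0 0 + \tr R0 <= P0.

Definition P11_optimal M N (G : 'M[C]_(N, M)) (h : 'cV[C]_M)
  (Gamma sigma2 P0 : C) (w : 'cV[C]_M) (R0 : 'M[C]_M) : Prop :=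
  P11_feasible h Gamma sigma2 P0 w R0 /\
  forall w' R0', P11_feasible h Gamma sigma2 P0 w' R0' ->
    ext_le (fobj G (w *m ctr w + R0)) (fobj G (w' *m ctr w' + R0')).

Definition SDR12_feasible M (h : 'cV[C]_M) (Gamma sigma2 P0 : C)
  (W1 R0 : 'M[C]_M) : Prop :=
  let H1 := h *m ctr h in
  psd W1 /\ psd R0 /\
  (1 + Gamma^-1) * \tr (H1 *m W1) - \tr (H1 *m (W1 + R0)) >= sigma2 /\
  \tr W1 + \tr R0 <= P0.

Definition SDR12_optimal M N (G : 'M[C]_(N, M)) (h : 'cV[C]_M)
  (Gamma sigma2 P0 : C) (W1 R0 : 'M[C]_M) : Prop :=
  SDR12_feasible h Gamma sigma2 P0 W1 R0 /\
  forall W1' R0', SDR12_feasible h Gamma sigma2 P0 W1' R0' ->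
    ext_le (fobj G (W1 + R0)) (fobj G (W1' + R0')).

End Defs.

(* Main.v *)
Require Import Defs.
From HB Require Import structures.
From mathcomp Require Import all_boot all_order all_algebra.
From mathcomp Require Import ring.
Import Order.TTheory GRing.Theory Num.Theory.
Set Implicit Arguments. Unset Strict Implicit.
Local Open Scope ring_scope.

Section H.
Variable C : numClosedFieldType.

Lemma ctrE m n (A : 'M[C]_(m,n)) i j : ctr A i j = (A j i)^*.
Proof. by rewrite /ctr !mxE. Qed.

Lemma ctr_mul m n p (A : 'M[C]_(m,n)) (B : 'M[C]_(n,p)) : ctr (A *m B) = ctr B *m ctr A.
Proof. by rewrite /ctr map_mxM trmx_mul. Qed.

Lemma ctr_add m n (A B : 'M[C]_(m,n)) : ctr (A + B) = ctr A + ctr B.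
Proof. by apply/matrixP=> i j; rewrite !mxE rmorphD. Qed.

Lemma ctr_opp m n (A : 'M[C]_(m,n)) : ctr (- A) = - ctr A.
Proof. by apply/matrixP=> i j; rewrite !mxE rmorphN. Qed.

Lemma ctr_scale m n a (A : 'M[C]_(m,n)) : ctr (a *: A) = a^* *: ctr A.
Proof. by apply/matrixP=> i j; rewrite !mxE rmorphM. Qed.

Lemma ctrK m n (A : 'M[C]_(m,n)) : ctr (ctr A) = A.
Proof. by apply/matrixP=> i j; rewrite !ctrE conjCK. Qed.


Lemma mul11 n (P : 'M[C]_(n,1)) (Q : 'M[C]_(1,n)) i j : (P *m Q) i j = P i 0 * Q 0 j.
Proof. by rewrite mxE big_ord1. Qed.

Definition B n (X : 'M[C]_n) (x y : 'cV[C]_n) := (ctr x *m X *m y) 0 0.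

Lemma B_conj n (X : 'M[C]_n) x y : ctr X = X -> B X y x = (B X x y)^*.
Proof.
move=> hX; by rewrite /B -ctrE !ctr_mul ctrK hX mulmxA.
Qed.

Lemma B_addM n (X Y : 'M[C]_n) x y : B (X + Y) x y = B X x y + B Y x y.
Proof. by rewrite /B mulmxDr mulmxDl mxE. Qed.

Lemma B_oppM n (X : 'M[C]_n) x y : B (- X) x y = - B X x y.
Proof. by rewrite /B mulmxN mulNmx mxE. Qed.

Lemma B_r n (X : 'M[C]_n) x a y z : B X x (a *: y + z) = a * B X x y + B X x z.
Proof. by rewrite /B mulmxDr -scalemxAr !mxE. Qed.

Lemma B_l n (X : 'M[C]_n) x a y z : B X (a *: y + z) x = a^* * B X y x + B X z x.
Proof. by rewrite /B ctr_add ctr_scale mulmxDl mulmxDl -!scalemxAl !mxE. Qed.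

Lemma B_rank1 n (u x y : 'cV[C]_n) : B (u *m ctr u) x y = (ctr x *m u) 0 0 * (ctr u *m y) 0 0.
Proof. by rewrite /B mulmxA -(mulmxA _ (ctr u)) mul11. Qed.

Lemma dot_conj n (u x : 'cV[C]_n) : (ctr u *m x) 0 0 = ((ctr x *m u) 0 0)^*.
Proof. by rewrite -ctrE ctr_mul ctrK. Qed.

Lemma tr_rank1 n (u : 'cV[C]_n) (W : 'M[C]_n) : \tr (u *m ctr u *m W) = B W u u.
Proof. by rewrite -mulmxA mxtrace_mulC /B /mxtrace big_ord1. Qed.

Lemma tr_rank1' n (u : 'cV[C]_n) : \tr (u *m ctr u) = (ctr u *m u) 0 0.
Proof. by rewrite mxtrace_mulC /mxtrace big_ord1. Qed.


Lemma B_rZ n (X : 'M[C]_n) x a y : B X x (a *: y) = a * B X x y.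
Proof. by rewrite /B -scalemxAr mxE. Qed.
Lemma B_lZ n (X : 'M[C]_n) x a y : B X (a *: y) x = a^* * B X y x.
Proof. by rewrite /B ctr_scale -!scalemxAl !mxE. Qed.
Lemma B_rD n (X : 'M[C]_n) x y z : B X x (y + z) = B X x y + B X x z.
Proof. by rewrite /B mulmxDr mxE. Qed.
Lemma B_lD n (X : 'M[C]_n) x y z : B X (y + z) x = B X y x + B X z x.
Proof. by rewrite /B ctr_add !mulmxDl mxE. Qed.

Lemma cauchy n (X : 'M[C]_n) h x : psd X -> 0 < B X h h ->
  B X x h * (B X x h)^* <= B X x x * B X h h.
Proof.
move=> [hX pX] bpos; set b := B X h h; set c := B X x h; set a := B X x x.
have := pX (b *: x + (- c^*) *: h).
rewrite -/(B X _ _) B_lD !B_lZ !B_rD !B_rZ.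
have Ehx : B X h x = c^* by apply: B_conj.
rewrite Ehx -/c -/a -/b rmorphN /= conjCK (geC0_conj (ltW bpos)).
move=> H; rewrite -subr_ge0 -(pmulr_rge0 _ bpos); apply: (le_trans H).
rewrite le_eqVlt; apply/orP; left; apply/eqP; rewrite (mulrC a b); ring.
Qed.
End H.

Unset Implicit Arguments.
Set Strict Implicit.

Theorem proposition4 (C : numClosedFieldType) (M N : nat)
  (G : 'M[C]_(N, M)) (hd : 'cV[C]_M) (hr : 'cV[C]_N)
  (Gamma sigma2 P0 : C) (v : 'cV[C]_N) :
  (0 < M)%N -> (0 < N)%N ->
  0 < Gamma -> 0 < sigma2 -> 0 < P0 ->
  (forall n : 'I_N, `|v n 0| = 1) ->
  (exists W1 R0 : 'M[C]_M,
     SDR12_optimal G (heff G hd hr v) Gamma sigma2 P0 W1 R0) ->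
  exists (w : 'cV[C]_M) (R0 : 'M[C]_M),
    P11_optimal G (heff G hd hr v) Gamma sigma2 P0 w R0 /\
    qf (heff G hd hr v) R0 = 0.
Proof.
move=> _ _ Gp sp P0p _ [W1 [R0 [[[hW1 pW1] [[hR0 pR0] [hcon hpow]]] hopt]]].
set h := heff G hd hr v in hcon hopt *.
set X := W1 + R0.
have hX : ctr X = X by rewrite /X ctr_add hW1 hR0.
have pX : forall x, 0 <= B X x x.
  by move=> x; rewrite B_addM addr_ge0 //; [apply: pW1 | apply: pR0].
set a := B W1 h h; set b := B R0 h h.
have a0 : 0 <= a by apply: pW1.
have b0 : 0 <= b by apply: pR0.
have Ea : \tr (h *m ctr h *m W1) = a by rewrite tr_rank1.
have Eab : \tr (h *m ctr h *m (W1 + R0)) = a + b by rewrite tr_rank1 B_addM.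
rewrite Ea Eab in hcon.
have hcon' : sigma2 + b <= Gamma^-1 * a.
  by rewrite -lerBrDr; apply: (le_trans hcon); rewrite le_eqVlt; apply/orP; left; apply/eqP; ring.
have Gs : Gamma * sigma2 <= a.
  have Gi : 0 < Gamma^-1 by rewrite invr_gt0.
  rewrite -(ler_pM2l Gi) mulKf ?gt_eqF //.
  by apply: le_trans hcon'; rewrite lerDl.
have Eb : B X h h = a + b by rewrite B_addM.
have Gsb : Gamma * sigma2 <= B X h h by rewrite Eb (le_trans Gs) // lerDl.
have bpos : 0 < B X h h by apply: lt_le_trans Gsb; rewrite mulr_gt0.
set beta := B X h h in Eb Gsb bpos.
set s := sqrtC beta.
have s0 : 0 < s by rewrite sqrtC_gt0.
have s2 : s * s = beta by rewrite -expr2 sqrtCK.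
have sc : s^-1^* = s^-1 by rewrite geC0_conj // invr_ge0 ltW.
set w := s^-1 *: (X *m h).
have dw : forall x, (ctr x *m w) 0 0 = s^-1 * B X x h.
  by move=> x; rewrite /w -scalemxAr mxE /B mulmxA.
have Bw : forall x y, B (w *m ctr w) x y = s^-1 * B X x h * (s^-1 * B X y h)^*.
  by move=> x y; rewrite B_rank1 dw dot_conj dw.
have hsw : s^-1 * beta = s by rewrite -s2 mulKf ?gt_eqF.
set R := X - w *m ctr w.
have qR : B R h h = 0.
  rewrite /R B_addM B_oppM Bw -/beta hsw geC0_conj ?ltW // s2 subrr //.
exists w, R; split; last exact: qR.
split.
  split; [split|split].
  - rewrite /R ctr_add ctr_opp ctr_mul ctrK hX //.
  - move=> x; rewrite -/(B R x x) /R B_addM B_oppM Bw rmorphM /= sc.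
    set c := B X x h.
    have -> : s^-1 * c * (s^-1 * c^*) = beta^-1 * (c * c^*) by rewrite -s2 invfM; ring.
    rewrite subr_ge0 -(ler_pM2l bpos) mulVKf ?gt_eqF // (mulrC beta); exact: cauchy.
  - rewrite /qf -/(B R h h) qR add0r dw -/beta hsw (ger0_norm (ltW s0)) expr2 s2.
    by rewrite ler_pdivlMr.
  - by rewrite /R linearB /= -tr_rank1' addrC subrK /X mxtraceD.
move=> w' R' [[hR' pR'] [sinr pw]].
rewrite /R addrC subrK; apply: hopt.
split; first split.
  by rewrite ctr_mul ctrK.
  by move=> x; rewrite -/(B _ x x) B_rank1 (dot_conj w' x) mul_conjC_ge0.
split; first by split.
split; last by rewrite tr_rank1'.
rewrite mulmxDr mxtraceD !tr_rank1 B_rank1 (dot_conj w' h).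
set d := (ctr h *m w') 0 0.
set q := B R' h h.
have q0 : 0 <= q by apply: pR'.
move: sinr; rewrite /qf -/(B R' h h) -/q -/d normCK.
have qs : 0 < q + sigma2 by rewrite ltr_wpDl.
rewrite ler_pdivlMr // => sinr.
have Gi : 0 < Gamma^-1 by rewrite invr_gt0.
have : q + sigma2 <= Gamma^-1 * (d * d^*).
  by rewrite -(ler_pM2l Gp) mulVKf ?gt_eqF // mulrC.
move=> H; rewrite -lerBrDl in H; apply: (le_trans H).
rewrite le_eqVlt; apply/orP; left; apply/eqP; ring.
Qed.
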